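(* Let $a\in(\frac12,\frac23]$. Define \[ d_n=\begin{cases} t_1, & n=0,\\ \min\big\{\frac{t_1+1}{1},\dots,\frac{t_n+1}{n},\frac{t_{n+1}}{n+1}\big\}, & 1\le n<\sigma_a,\\ \min\big\{\frac{t_1+1}{1},\dots,\frac{t_n+1}{n}\big\}, & n=\sigma_a<\infty.\end{cases} \] Then for any $x\in[0,1)$ and integers $k,n$ with $0\le n\le\sigma_a$ and $0\le k\le\sigma_a(x)$ we have $d_n\ge t_1$ and \[ t_k(x)\ge k\,d_n-\mathbb 1\{n\neq0\}. \]
   Context: For $a\in[\frac12,\frac23]$ let $I_a=\big(\frac{2a-1}{1-a},1\big)$ and define $T_a$ on $[0,\frac1{1-a}]\setminus I_a$ by $T_a(x)=\frac1a(x+1)$ for $0\le x\le\frac{2a-1}{1-a}$ and $T_a(x)=\frac1a(x-1)$ for $1\le x\le\frac1{1-a}$; for $a=\frac23$ set $T_{2/3}(1)=0$. Let $\varkappa_a(x)=\inf\{k\ge0:T_a^k(x)\in I_a\}$ ($\inf\emptyset=\infty$). Let $\sigma_a(x)=\sum_{n=1}^{\varkappa_a(x)}\mathbb 1\{T_a^n(x)<1\}$ (the number of returns to $[0,1)$), $t_0(x)=0$ and $t_k(x)=\inf\{n>t_{k-1}(x):T_a^n(x)<1\}$ for $1\le k<\sigma_a(x)+1$ (the return times). Write $\sigma_a=\sigma_a(0)$ and $t_k=t_k(0)$. *)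

(* Defs.v *)
From Stdlib Require Import Reals Lra Lia List Arith.
From Stdlib Require Import ClassicalEpsilon ClassicalDescription.
Open Scope R_scope.

Definition inI (a y : R) : Prop := (2*a - 1)/(1 - a) < y /\ y < 1.

(* T_a, made total: on the domain [0,1/(1-a)] \ I_a this agrees with the
   paper's map (branch (x+1)/a for 0 <= x <= (2a-1)/(1-a) < 1 ... and
   (x-1)/a for 1 <= x <= 1/(1-a)), including T_{2/3}(1) = 0. *)
Definition T (a x : R) : R :=
  if Rlt_dec x 1 then (x + 1) / a else (x - 1) / a.

Fixpoint Tn (a : R) (n : nat) (x : R) : R :=
  match n with
  | O => x
  | S m => T a (Tn a m x)
  end.

Fixpoint count_ret (a x : R) (N : nat) : nat :=
  match N with
  | O => O
  | S M => (count_ret a x M + (if Rlt_dec (Tn a (S M) x) 1 then 1 else 0))%nat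
  end.

(* "N <= kappa_a(x)": the orbit does not enter I_a at any time m < N
   (kappa_a(x) = inf{k >= 0 : T_a^k x in I_a}, possibly infinite). *)
Definition before_kappa (a x : R) (N : nat) : Prop :=
  forall m : nat, (m < N)%nat -> ~ inI a (Tn a m x).

(* "k <= sigma_a(x)" where sigma_a(x) = sum_{n=1}^{kappa_a(x)} 1{T_a^n x < 1}
   in N u {oo}: some finite partial sum up to N <= kappa_a(x) reaches k. *)
Definition sigma_ge (a x : R) (k : nat) : Prop :=
  exists N : nat, before_kappa a x N /\ (k <= count_ret a x N)%nat.

Definition sigma_eq (a x : R) (s : nat) : Prop :=
  sigma_ge a x s /\ ~ sigma_ge a x (S s).

(* return times: t_0(x) = 0, t_k(x) = inf{n > t_{k-1}(x) : T_a^n x < 1}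
   (the least such n, chosen by the epsilon operator; meaningful for
   k <= sigma_a(x), which is the only range where it is used). *)
Fixpoint t (a x : R) (k : nat) : nat :=
  match k with
  | O => O
  | S k' =>
      let p := t a x k' in
      epsilon (inhabits O)
        (fun n : nat => (p < n)%nat /\ Tn a n x < 1 /\
           forall m : nat, (p < m)%nat -> (m < n)%nat -> ~ (Tn a m x < 1))
  end.

Definition minl (d : R) (l : list R) : R := fold_right Rmin d l.

(* d_n, built from t_j = t_j(0) *)
Definition d (a : R) (n : nat) : R :=
  let tt j := INR (t a 0 j) in
  let terms := map (fun j => (tt j + 1) / INR j) (seq 1 n) in
  match n with
  | O => tt 1%nat
  | S _ =>
      if excluded_middle_informative (sigma_ge a 0 (S n))
      then (* 1 <= n < sigma_a *) minl (tt (S n) / INR (S n)) terms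
      else (* n = sigma_a < oo *) minl ((tt 1%nat + 1) / 1) terms
  end.

(* Main.v *)
Require Import Defs.
From Stdlib Require Import Reals Lra Lia List Arith.
From Stdlib Require Import ClassicalEpsilon ClassicalDescription Classical.
Open Scope R_scope.

Lemma Tn_add a m j x : Tn a (m + j) x = Tn a j (Tn a m x).
Proof. induction j; simpl. - now rewrite Nat.add_0_r. - rewrite Nat.add_succ_r; simpl; now rewrite IHj. Qed.

Lemma count_add a x m j :
  count_ret a x (m + j) = (count_ret a x m + count_ret a (Tn a m x) j)%nat.
Proof.
  induction j; simpl.
  - rewrite Nat.add_0_r; lia.
  - rewrite Nat.add_succ_r; simpl. rewrite IHj, Tn_add. destruct Rlt_dec; lia.
Qed.

Lemma count_mono a x M N : (M <= N)%nat -> (count_ret a x M <= count_ret a x N)%nat.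
Proof. induction 1; simpl; [lia | destruct Rlt_dec; lia]. Qed.

Lemma count_exists a x N k : (1 <= k)%nat -> (k <= count_ret a x N)%nat ->
  exists m, (m <= N)%nat /\ Tn a m x < 1 /\ count_ret a x m = k.
Proof.
  induction N; intros H1 H2; simpl in H2.
  - lia.
  - destruct (le_lt_dec k (count_ret a x N)) as [h|h].
    + destruct (IHN H1 h) as [m [? [? ?]]]. exists m; repeat split; auto.
    + destruct (Rlt_dec (T a (Tn a N x)) 1) as [r|r].
      * exists (S N); repeat split; auto. simpl. destruct Rlt_dec; [lia|contradiction].
      * lia.
Qed.

Lemma last_ret a x N k : count_ret a x N = S k ->
  exists p, (p <= N)%nat /\ Tn a p x < 1 /\ count_ret a x p = S k /\
    forall q, (p < q)%nat -> (q <= N)%nat -> ~ Tn a q x < 1.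
Proof.
  induction N; intros H; simpl in H.
  - lia.
  - destruct (Rlt_dec (T a (Tn a N x)) 1) as [r|r].
    + exists (S N); repeat split; auto.
      * simpl. destruct Rlt_dec; [lia|contradiction].
      * intros; lia.
    + destruct (IHN ltac:(lia)) as [p [h1 [h2 [h3 h4]]]].
      exists p; repeat split; auto. intros q hq hq'.
      destruct (Nat.eq_dec q (S N)) as [->|hne]; [exact r|]. apply h4; lia.
Qed.

Lemma zero_ret a x N : count_ret a x N = 0%nat ->
  forall q, (1 <= q)%nat -> (q <= N)%nat -> ~ Tn a q x < 1.
Proof.
  induction N; intros H q h1 h2; simpl in H.
  - lia.
  - destruct (Rlt_dec (T a (Tn a N x)) 1) as [r|r]; [lia|].
    destruct (Nat.eq_dec q (S N)) as [->|hne]; [exact r|]. apply IHN; lia.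
Qed.

Lemma t_step a x k m : (t a x k < m)%nat -> Tn a m x < 1 ->
  (forall q, (t a x k < q)%nat -> (q < m)%nat -> ~ Tn a q x < 1) ->
  t a x (S k) = m.
Proof.
  intros h1 h2 h3.
  change (t a x (S k)) with (epsilon (inhabits O) (fun n : nat => (t a x k < n)%nat /\ Tn a n x < 1 /\
           forall m : nat, (t a x k < m)%nat -> (m < n)%nat -> ~ (Tn a m x < 1))).
  set (P := fun n : nat => (t a x k < n)%nat /\ Tn a n x < 1 /\
           forall m : nat, (t a x k < m)%nat -> (m < n)%nat -> ~ (Tn a m x < 1)).
  assert (HP : P m) by (repeat split; auto).
  pose proof (epsilon_spec (inhabits O) P (ex_intro _ _ HP)) as He.
  set (e := epsilon (inhabits O) P) in *.
  destruct He as [e1 [e2 e3]].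
  destruct (lt_eq_lt_dec e m) as [[h|h]|h]; auto.
  - exfalso; exact (h3 e e1 h e2).
  - exfalso; exact (e3 m h1 h h2).
Qed.

Lemma t_spec a x k : forall m, Tn a m x < 1 -> count_ret a x m = S k -> t a x (S k) = m.
Proof.
  induction k as [|k IH]; intros m Hr Hc.
  - destruct m as [|m']; [simpl in Hc; lia|].
    simpl in Hc. destruct (Rlt_dec (T a (Tn a m' x)) 1) as [r|r]; [|simpl in Hr; contradiction].
    apply t_step; auto; simpl; [lia|].
    intros q hq1 hq2. apply (zero_ret a x m'); lia.
  - destruct m as [|m']; [simpl in Hc; lia|].
    simpl in Hc. destruct (Rlt_dec (T a (Tn a m' x)) 1) as [r|r]; [|simpl in Hr; contradiction].
    destruct (last_ret a x m' k ltac:(lia)) as [p [h1 [h2 [h3 h4]]]].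
    rewrite <- (IH p h2 h3) in h4, h1.
    apply t_step; auto; [lia|].
    intros q hq1 hq2. apply h4; lia.
Qed.

Lemma t_of_count a x N k : (1 <= k)%nat -> (k <= count_ret a x N)%nat ->
  exists m, (m <= N)%nat /\ Tn a m x < 1 /\ count_ret a x m = k /\ t a x k = m.
Proof.
  intros h1 h2. destruct (count_exists a x N k h1 h2) as [m [? [? ?]]].
  exists m; repeat split; auto. destruct k as [|k]; [lia|]. now apply t_spec.
Qed.

Lemma T_nonneg a y : 0 < a -> 0 <= y -> 0 <= T a y.
Proof.
  intros Ha Hy. unfold T. destruct Rlt_dec; unfold Rdiv; apply Rmult_le_pos;
  try (left; apply Rinv_0_lt_compat; lra); lra.
Qed.

Lemma Tn_nonneg a m y : 0 < a -> 0 <= y -> 0 <= Tn a m y.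
Proof. intros; induction m; simpl; auto using T_nonneg. Qed.

Lemma t_add a x N r k : 0 < a -> 0 <= x -> before_kappa a x N ->
  (1 <= r)%nat -> (r <= k)%nat -> (k <= count_ret a x N)%nat ->
  let y := Tn a (t a x r) x in
  t a x k = (t a x r + t a y (k - r))%nat /\ sigma_ge a y (k - r) /\ 0 <= y < 1.
Proof.
  intros Ha Hx Hbk h1 h2 h3 y.
  destruct (t_of_count a x N r h1 ltac:(lia)) as [mr [r1 [r2 [r3 r4]]]].
  destruct (t_of_count a x N k ltac:(lia) h3) as [mk [k1 [k2 [k3 k4]]]].
  assert (Hle : (mr <= mk)%nat).
  { destruct (le_lt_dec mr mk) as [h|h]; auto.
    pose proof (count_mono a x mk mr ltac:(lia)). destruct (Nat.eq_dec r k) as [->|hne]; [lia|lia]. }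
  unfold y; rewrite r4. 
  assert (Hy : 0 <= Tn a mr x < 1) by (split; auto using Tn_nonneg).
  split; [|split; auto].
  - rewrite k4. destruct (Nat.eq_dec k r) as [->|hne].
    + rewrite Nat.sub_diag. simpl. rewrite <- r4, <- k4. lia.
    + replace mk with (mr + (mk - mr))%nat by lia.
      f_equal. symmetry. replace (k - r)%nat with (S (k - r - 1)) by lia.
      apply t_spec.
      * rewrite <- Tn_add. replace (mr + (mk - mr))%nat with mk by lia. auto.
      * pose proof (count_add a x mr (mk - mr)). replace (mr + (mk - mr))%nat with mk in H by lia. lia.
  - exists (N - mr)%nat. split.
    + intros m' hm'. rewrite <- Tn_add. apply Hbk. lia.
    + pose proof (count_add a x mr (N - mr)). replace (mr + (N - mr))%nat with N in H by lia. lia.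
Qed.

Lemma T_mono a u v : 0 < a -> u <= v -> ~ (u < 1 /\ ~ v < 1) -> T a u <= T a v.
Proof.
  intros Ha Huv Hn. unfold T. destruct (Rlt_dec u 1); destruct (Rlt_dec v 1).
  - unfold Rdiv; apply Rmult_le_compat_r; [left; apply Rinv_0_lt_compat|]; lra.
  - exfalso; tauto.
  - lra.
  - unfold Rdiv; apply Rmult_le_compat_r; [left; apply Rinv_0_lt_compat|]; lra.
Qed.

Definition dis a x0 x1 m := Tn a m x0 < 1 /\ ~ Tn a m x1 < 1.

Lemma cmp a x0 x1 : 0 < a -> x0 <= x1 -> forall m,
  (forall m', (m' < m)%nat -> ~ dis a x0 x1 m') -> Tn a m x0 <= Tn a m x1.
Proof.
  intros Ha H01. induction m; intros Hd; simpl; auto.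
  apply T_mono; [exact Ha| |].
  - apply IHm. intros; apply Hd; lia.
  - apply Hd; lia.
Qed.

Lemma count_eq a x0 x1 m : (forall m', (m' <= m)%nat -> ~ dis a x0 x1 m') ->
  (forall m', (m' <= m)%nat -> Tn a m' x0 <= Tn a m' x1) ->
  count_ret a x1 m = count_ret a x0 m.
Proof.
  induction m; intros Hd Hl; simpl; auto.
  rewrite IHm; [| intros; apply Hd; lia | intros; apply Hl; lia].
  specialize (Hd (S m) (le_n _)); specialize (Hl (S m) (le_n _)). unfold dis in Hd; simpl in Hd, Hl.
  destruct (Rlt_dec (T a (Tn a m x1)) 1); destruct (Rlt_dec (T a (Tn a m x0)) 1); try lia.
  - lra.
  - exfalso; tauto.
Qed.

Lemma least_or_none (P : nat -> Prop) N : (forall m, (m <= N)%nat -> ~ P m) \/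
  exists m, (m <= N)%nat /\ P m /\ forall m', (m' < m)%nat -> ~ P m'.
Proof.
  induction N.
  - destruct (classic (P 0%nat)) as [h|h].
    + right; exists 0%nat; repeat split; auto; intros; lia.
    + left; intros m hm; replace m with 0%nat by lia; auto.
  - destruct IHN as [h|[m [h1 [h2 h3]]]].
    + destruct (classic (P (S N))) as [h'|h'].
      * right; exists (S N); repeat split; auto. intros; apply h; lia.
      * left; intros m hm. destruct (Nat.eq_dec m (S N)) as [->|]; auto. apply h; lia.
    + right; exists m; repeat split; auto.
Qed.

Lemma key a x N k : 0 < a -> 0 <= x < 1 -> before_kappa a x N -> (k <= count_ret a x N)%nat ->
  exists J, (1 <= J)%nat /\
    (forall i, (1 <= i)%nat -> (i <= k)%nat -> (i < J)%nat -> t a x i = t a 0 i /\ sigma_ge a 0 i) /\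
    ((J <= k)%nat -> sigma_ge a 0 J /\ (t a 0 J + 1 <= t a x J)%nat).
Proof.
  intros Ha Hx Hbk Hk.
  destruct (least_or_none (dis a 0 x) N) as [Hn|[m [hm1 [hm2 hm3]]]].
  - assert (Hle : forall m, (m <= N)%nat -> Tn a m 0 <= Tn a m x).
    { intros m hm. apply cmp; auto; [lra|]. intros; apply Hn; lia. }
    assert (Hc : forall m, (m <= N)%nat -> count_ret a x m = count_ret a 0 m).
    { intros m hm. apply count_eq; intros; [apply Hn|apply Hle]; lia. }
    assert (Hb0 : before_kappa a 0 N).
    { intros m' hm' HI. apply (Hn m'); [lia|]. pose proof (Hle m' ltac:(lia)).
      pose proof (Hbk m' hm'). unfold inI in *. split; [lra|]. intro; apply H0; lra. }
    exists (S k). split; [lia|]. split.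
    + intros i i1 i2 i3.
      destruct (t_of_count a x N i i1 ltac:(lia)) as [m [q1 [q2 [q3 q4]]]].
      pose proof (Hle m q1). pose proof (Hc m q1).
      split.
      * rewrite q4. destruct i as [|i]; [lia|]. symmetry; apply t_spec; [lra|lia].
      * exists N; split; auto. rewrite <- Hc; lia.
    + intros; lia.
  - destruct m as [|m'].
    { exfalso. destruct hm2 as [_ h]. simpl in h. lra. }
    assert (Hle : forall q, (q <= S m')%nat -> Tn a q 0 <= Tn a q x).
    { intros q hq. apply cmp; auto; [lra|]. intros; apply hm3; lia. }
    assert (Hc : forall q, (q <= m')%nat -> count_ret a x q = count_ret a 0 q).
    { intros q hq. apply count_eq; intros; [apply hm3|apply Hle]; lia. }
    assert (Hb0 : before_kappa a 0 (S m')).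
    { intros q hq HI. apply (hm3 q); [lia|]. pose proof (Hle q ltac:(lia)).
      pose proof (Hbk q ltac:(lia)). unfold inI in *. split; [lra|]. intro; apply H0; lra. }
    destruct hm2 as [d0 dx]. simpl in d0, dx.
    assert (HJ : count_ret a 0 (S m') = S (count_ret a 0 m')).
    { simpl. destruct Rlt_dec; [lia|contradiction]. }
    assert (HJx : count_ret a x (S m') = count_ret a x m').
    { simpl. destruct Rlt_dec; [contradiction|lia]. }
    pose proof (Hc m' (le_n _)) as Hcm.
    exists (count_ret a 0 (S m')). split; [lia|]. split.
    + intros i i1 i2 i3.
      destruct (t_of_count a x m' i i1 ltac:(lia)) as [q [q1 [q2 [q3 q4]]]].
      pose proof (Hle q ltac:(lia)). pose proof (Hc q q1).
      split.
      * rewrite q4. destruct i as [|i]; [lia|]. symmetry; apply t_spec; [lra|lia].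
      * exists (S m'); split; auto. lia.
    + intros hJ. split.
      * exists (S m'); split; auto.
      * rewrite HJ. rewrite (t_spec a 0 _ (S m')) by (simpl; auto).
        destruct (t_of_count a x N (S (count_ret a 0 m')) ltac:(lia) ltac:(lia)) as [q [q1 [q2 [q3 q4]]]].
        rewrite q4. destruct (le_lt_dec q (S m')) as [h|h]; [|lia].
        pose proof (count_mono a x q (S m') h). lia.
Qed.

Lemma G a D c n : 0 < a -> 0 <= c ->
  (forall j, (1 <= j)%nat -> (j <= n)%nat -> INR j * D <= INR (t a 0 j) + c) ->
  (forall j, (1 <= j)%nat -> (j <= n)%nat -> INR j * D <= INR (t a 0 j) + 1) ->
  (sigma_ge a 0 (S n) -> INR (S n) * D <= INR (t a 0 (S n))) ->
  forall k x, 0 <= x < 1 -> sigma_ge a x k -> INR k * D - c <= INR (t a x k).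
Proof.
  intros Ha Hc H1 H2 H3 k.
  induction k as [k IH] using (well_founded_induction lt_wf).
  intros x Hx [N [Hbk Hk]].
  destruct (Nat.eq_dec k 0) as [->|Hk0].
  { simpl. lra. }
  assert (block : forall r, (1 <= r)%nat -> (r <= k)%nat -> INR r * D <= INR (t a x r) ->
            INR k * D - c <= INR (t a x k)).
  { intros r r1 r2 Hr.
    destruct (t_add a x N r k Ha ltac:(lra) Hbk r1 r2 Hk) as [e [Hs Hy]].
    rewrite e, plus_INR.
    pose proof (IH (k - r)%nat ltac:(lia) _ Hy Hs).
    assert (INR (k - r) * D = INR k * D - INR r * D) by (rewrite minus_INR; [ring|lia]).
    lra. }
  destruct (key a x N k Ha Hx Hbk Hk) as [J [J1 [J2 J3]]].
  destruct (le_lt_dec J k) as [HJk|HkJ].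
  - destruct (J3 HJk) as [S0 Hlt].
    destruct (le_lt_dec J n) as [HJn|HnJ].
    + apply (block J); auto. pose proof (H2 J J1 HJn).
      apply le_INR in Hlt. rewrite plus_INR in Hlt. simpl in Hlt. lra.
    + apply (block (S n)); [lia|lia|].
      destruct (Nat.eq_dec (S n) J) as [e|ne].
      * rewrite e in *. pose proof (H3 S0). apply le_INR in Hlt. rewrite plus_INR in Hlt. simpl in Hlt. lra.
      * destruct (J2 (S n) ltac:(lia) ltac:(lia) ltac:(lia)) as [e S1].
        rewrite e. auto.
  - destruct (le_lt_dec k n) as [Hkn|Hnk].
    + destruct (J2 k ltac:(lia) ltac:(lia) HkJ) as [e _]. rewrite e.
      pose proof (H1 k ltac:(lia) Hkn). lra.
    + apply (block (S n)); [lia|lia|].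
      destruct (J2 (S n) ltac:(lia) ltac:(lia) ltac:(lia)) as [e S1].
      rewrite e. auto.
Qed.

Lemma minl_le_d d0 l : minl d0 l <= d0.
Proof. induction l as [|h l IHl]; simpl; [lra|]. eapply Rle_trans; [apply Rmin_r|exact IHl]. Qed.

Lemma minl_le_in d0 l y : In y l -> minl d0 l <= y.
Proof.
  induction l as [|z l IHl]; simpl; [tauto|]. intros [->|h].
  - apply Rmin_l.
  - eapply Rle_trans; [apply Rmin_r|exact (IHl h)].
Qed.

Lemma minl_ge d0 l b : b <= d0 -> (forall y, In y l -> b <= y) -> b <= minl d0 l.
Proof.
  intros h1 h2. induction l; simpl; auto.
  apply Rmin_glb; [apply h2; simpl; auto|]. apply IHl. intros; apply h2; simpl; auto.
Qed.

Lemma div_ge p q b : 0 < q -> q * b <= p -> b <= p / q.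
Proof.
  intros. apply Rmult_le_reg_l with q; auto. replace (q * (p / q)) with p by (field; lra). lra.
Qed.

Lemma div_le p q b : 0 < q -> b <= p / q -> q * b <= p.
Proof.
  intros. replace p with (q * (p / q)) by (field; lra). apply Rmult_le_compat_l; lra.
Qed.

Lemma sigma_ge_mono a x j k : sigma_ge a x k -> (j <= k)%nat -> sigma_ge a x j.
Proof. intros [N [h1 h2]] h. exists N; split; auto; lia. Qed.

Theorem lemma3p2 (a : R) (Ha : 1/2 < a <= 2/3) :
  forall (x : R) (k n : nat),
    0 <= x < 1 ->
    (n = 0%nat \/ sigma_ge a 0 n) ->
    (k = 0%nat \/ sigma_ge a x k) ->
    INR (t a 0 1) <= d a n /\
    INR (t a x k) >= INR k * d a n - (if Nat.eqb n 0 then 0 else 1).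
Proof.
  intros x k n Hx Hn Hk.
  assert (Ha0 : 0 < a) by lra.
  assert (Hsk : sigma_ge a x k).
  { destruct Hk as [->|h]; auto. exists 0%nat; split; [intros m hm; lia | simpl; lia]. }
  set (u1 := INR (t a 0 1)).
  assert (G0 : forall k y, 0 <= y < 1 -> sigma_ge a y k -> INR k * u1 <= INR (t a y k)).
  { intros k' y Hy Hs. pose proof (G a u1 0 0 Ha0 (Rle_refl 0)) as HG.
    assert (INR k' * u1 - 0 <= INR (t a y k')); [|lra].
    apply HG; auto; try (intros; lia). intros _. unfold u1. simpl INR. lra. }
  destruct n as [|n'].
  - assert (E : d a 0 = u1) by reflexivity. rewrite E. split; [lra|].
    cbn [Nat.eqb]. pose proof (G0 k x Hx Hsk). lra.
  - destruct Hn as [Hn|Hn]; [lia|].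
    set (D := d a (S n')).
    assert (FD1 : forall j, (1 <= j)%nat -> (j <= S n')%nat -> INR j * D <= INR (t a 0 j) + 1).
    { intros j j1 j2. apply div_le; [apply lt_0_INR; lia|].
      unfold D, d; cbv beta iota zeta.
      destruct (excluded_middle_informative _); apply minl_le_in;
        apply (in_map (fun j0 => (INR (t a 0 j0) + 1) / INR j0)); apply in_seq; lia. }
    assert (FD3 : sigma_ge a 0 (S (S n')) -> INR (S (S n')) * D <= INR (t a 0 (S (S n')))).
    { intros hs. apply div_le; [apply lt_0_INR; lia|].
      unfold D, d; cbv beta iota zeta.
      destruct (excluded_middle_informative _); [apply minl_le_d|contradiction]. }
    split.
    + unfold D, d; cbv beta iota zeta.
      assert (Hl : forall y, In y (map (fun j => (INR (t a 0 j) + 1) / INR j) (seq 1 (S n'))) -> u1 <= y).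
      { intros y hy. apply in_map_iff in hy. destruct hy as [j [<- hj]]. apply in_seq in hj.
        apply div_ge; [apply lt_0_INR; lia|].
        pose proof (G0 j 0 ltac:(lra) (sigma_ge_mono a 0 j (S n') Hn ltac:(lia))). lra. }
      match goal with |- context [excluded_middle_informative ?P] => destruct (excluded_middle_informative P) as [hs|hs] end; apply minl_ge; auto.
      * apply div_ge; [apply lt_0_INR; lia|]. apply G0; auto; lra.
      * unfold u1. lra.
    + cbn [Nat.eqb].
      pose proof (G a D 1 (S n') Ha0 ltac:(lra) FD1 FD1 FD3 k x Hx Hsk). lra.
Qed.
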